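(* Let $\beta>0$ and let $\{M(N)\}_{N\ge1}$ be a sequence of positive integers. If the family $\{Z^{f,\beta,h_c^a(\beta)}_{N,M(N),\omega}\}_{N\ge1}$ is uniformly integrable under $\mathbb P$, then there exists $\zeta>0$ such that for every sequence of events $\{A_N\}_{N\ge1}$ (events for $\tau$) with $\lim_{N\to\infty}\mathbf P(A_N)=0$ there is $N_0\in\mathbb N$ such that $$\inf_{N\ge N_0}\mathbb P\Big(\mathbf P^{f,\beta,h_c^a(\beta)}_{N,M(N),\omega}(A_N)\le\tfrac12\ \text{ and }\ Z^{f,\beta,h_c^a(\beta)}_{N,M(N),\omega}>\tfrac12\Big)\ge\zeta.$$
   Context: Let $\mathbb N=\{1,2,\dots\}$. Fix $\alpha\ge0$ and a slowly varying function $L$, and set $K(n)=L(n)n^{-(2+\alpha)}$, normalized so that $\sum_{n,m\in\mathbb N}K(n+m)=1$. Let $\tau$ be a bivariate renewal process with law $\mathbf P$: $\tau_0=(0,0)$, i.i.d. increments with $\mathbf P(\tau_1=(n,m))=K(n+m)$, $n,m\in\mathbb N$; $\tau$ is identified with the random set of its points. Let $\omega=\{\omega_{n,m}\}$ be i.i.d. real random variables with law $\mathbb P$, centered, unit variance, $Q(\beta)=\mathbb E[e^{\beta\omega_{1,1}}]<\infty$ for all $\beta$; set $h_c^a(\beta)=-\log Q(\beta)$. The free partition function is $Z^{f,\beta,h}_{N,M,\omega}=\mathbf E[\exp(\sum_{n=1}^N\sum_{m=1}^M(\beta\omega_{n,m}+h)\mathbf 1_{(n,m)\in\tau})]$, and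 $\mathbf P^{f,\beta,h}_{N,M,\omega}$ is the probability measure on $\tau$ with density $\exp(\sum_{n=1}^N\sum_{m=1}^M(\beta\omega_{n,m}+h)\mathbf 1_{(n,m)\in\tau})/Z^{f,\beta,h}_{N,M,\omega}$ with respect to $\mathbf P$. *)

(* Defs.v *)
From HB Require Import structures.
From mathcomp Require Import all_boot all_order all_algebra.
From mathcomp Require Import all_classical all_reals all_analysis.
Set Implicit Arguments. Unset Strict Implicit. Unset Printing Implicit Defensive.
Import Order.TTheory GRing.Theory Num.Theory.
Import numFieldNormedType.Exports.
Local Open Scope classical_set_scope.
Local Open Scope ring_scope.

Section Defs.
Variable R : realType.

Definition pos2 (i : nat * nat) : bool := (0 < i.1)%N && (0 < i.2)%N.

Definition slowly_varying (L : R -> R) : Prop :=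
  (forall x, 0 < x -> 0 < L x) /\
  (forall c, 0 < c -> (fun x => L (c * x) / L x) @ +oo --> (1 : R)).

Definition Kfun (L : R -> R) (alpha : R) (n : nat) : R :=
  L n%:R * (n%:R) `^ (- (2 + alpha)).

Definition energy (om : nat -> nat -> R) (beta h : R) (N M : nat)
  (S : set (nat * nat)) : R :=
  \sum_(1 <= n < N.+1) \sum_(1 <= m < M.+1)
     (beta * om n m + h) * \1_S (n, m).

Section Renewal.
Context {d : measure_display} {T : measurableType d} (Ptau : probability T R).
Variable xi : nat -> T -> nat * nat.   (* i.i.d. increments of tau *)

Definition renewal_point (k : nat) (t : T) : nat * nat :=
  ((\sum_(i < k) (xi i t).1)%N, (\sum_(i < k) (xi i t).2)%N).

(** tau identified with the random set of its points *)
Definition renewal_set (t : T) : set (nat * nat) :=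
  range (fun k => renewal_point k t).

Definition Zfree (om : nat -> nat -> R) (beta h : R) (N M : nat) : R :=
  fine (\int[Ptau]_t (expR (energy om beta h N M (renewal_set t)))%:E).

Definition Pfree (om : nat -> nat -> R) (beta h : R) (N M : nat)
  (A : set (set (nat * nat))) : R :=
  fine (\int[Ptau]_(t in renewal_set @^-1` A)
          (expR (energy om beta h N M (renewal_set t)))%:E)
  / Zfree om beta h N M.
End Renewal.

Section Disorder.
Context {d : measure_display} {Om : measurableType d} (P : probability Om R).

Definition Qmgf (om : nat -> nat -> Om -> R) (beta : R) : R :=
  fine (\int[P]_w (expR (beta * om 1%N 1%N w))%:E).

Definition hca (om : nat -> nat -> Om -> R) (beta : R) : R :=
  - ln (Qmgf om beta).

Definition unif_integrable (X : nat -> Om -> R) : Prop :=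
  forall e : R, 0 < e -> exists c : R, forall N, (0 < N)%N ->
    let E := [set w | c < `|X N w| ] in
    (\int[P]_(w in E) (`|X N w|)%:E <= e%:E)%E.
End Disorder.

End Defs.

(* Main.v *)
Require Import Defs.
From HB Require Import structures.
From mathcomp Require Import all_boot all_order all_algebra.
From mathcomp Require Import all_classical all_reals all_analysis measurable_realfun.
From mathcomp Require Import ring lra zify.
Import Order.TTheory GRing.Theory Num.Theory.
Import numFieldNormedType.Exports.
Local Open Scope classical_set_scope.
Local Open Scope ring_scope.

Section Dis.
Context (R : realType) (d1 : measure_display) (Om : measurableType d1)
  (P : probability Om R) (om : nat -> nat -> Om -> R).
Hypothesis mom : forall n m, measurable_fun setT (om n m).
Hypothesis indep : forall (s : seq (nat * nat)) (B : nat * nat -> set R),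
     uniq s -> all pos2 s -> (forall i, measurable (B i)) ->
     P (\bigcap_(i in [set` s]) om i.1 i.2 @^-1` B i)
     = (\prod_(i <- s) P (om i.1 i.2 @^-1` B i))%E.

Definition omi (i : nat * nat) := om i.1 i.2.

Lemma mpre i (B : set R) : measurable B -> measurable (omi i @^-1` B).
Proof. by move=> mB; rewrite -(setTI (_ @^-1` _)); apply: mom. Qed.

Lemma momi i : measurable_fun setT (omi i).
Proof. exact: mom. Qed.

Definition Ev (t : seq (nat * nat)) (B : nat * nat -> set R) :=
  \bigcap_(j in [set` t]) omi j @^-1` B j.

Lemma mEv t B : (forall j, measurable (B j)) -> measurable (Ev t B).
Proof.
move=> mB; rewrite /Ev bigcap_seq; apply: bigsetI_measurable => j _.
exact: mpre.
Qed.

Lemma PfinE (A : set Om) : measurable A -> P A = (fine (P A))%:E.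
Proof. by move=> mA; rewrite fineK //; apply: fin_num_measure. Qed.

Lemma EvP t B w : Ev t B w <-> (forall j, j \in t -> B j (omi j w)).
Proof.
split => [H j jt|H j jt]; first exact: (H j jt).
exact: H.
Qed.

Section FsSec.
Variables (K : nat) (c : nat -> R) (A : nat -> set R).
Hypothesis c0 : forall k, 0 <= c k.
Hypothesis mA : forall k, measurable (A k).

Definition Fs (x : R) := \sum_(k < K) c k * \1_(A k) x.

Lemma mFs : measurable_fun setT Fs.
Proof.
apply: measurable_sum => k; apply: measurable_funM; first exact: measurable_cst.
exact: measurable_indic.
Qed.

Lemma Fs0 x : 0 <= Fs x.
Proof. by apply: sumr_ge0 => k _; rewrite mulr_ge0 // indicE ler0n. Qed.

Lemma G0 s : forall t B, uniq (s ++ t) -> all pos2 (s ++ t) ->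
  (forall j, measurable (B j)) ->
  (\int[P]_w ((\1_(Ev t B) w) * \prod_(i <- s) Fs (omi i w))%:E =
   ((fine (P (Ev t B))) * \prod_(i <- s) \sum_(k < K) c k * fine (P (omi i @^-1` A k)))%:E)%E.
Proof.
elim: s => [|i s IH] t B ust pst mB.
  rewrite big_nil mulr1.
  under eq_integral do rewrite big_nil mulr1.
  rewrite integral_indic //; last exact: mEv.
  by rewrite classical_sets.setIT -PfinE //; apply: mEv.
move: (ust) => /= /andP[Hi ust1].
have nit : i \notin t by move: Hi; rewrite mem_cat negb_or => /andP[].
have nis : i \notin s by move: Hi; rewrite mem_cat negb_or => /andP[].
have ut : uniq t by move: ust1; rewrite cat_uniq => /and3P[].
have pt : all pos2 t by move: pst; rewrite /= all_cat => /andP[_ /andP[]].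
have pi : pos2 i by move: pst => /= /andP[].
set Bk := fun k j => if j == i then A k else B j.
have mBk k j : measurable (Bk k j) by rewrite /Bk; case: ifP.
have EvE k : Ev (i :: t) (Bk k) = Ev t B `&` (omi i @^-1` A k).
  apply/seteqP; split => w /=.
    move=> H; split.
      move=> j jt; have := H j; rewrite /= /Bk.
      have -> : (j == i) = false by apply/eqP => ji; move: nit; rewrite -ji jt.
      by apply; rewrite /= in_cons jt orbT.
    by have := H i; rewrite /Bk eqxx; apply; rewrite /= in_cons eqxx.
  move=> [H1 H2] j /=; rewrite in_cons /Bk => /orP[/eqP ->|jt]; first by rewrite eqxx.
  have -> : (j == i) = false by apply/eqP => ji; move: nit; rewrite -ji jt.
  exact: H1.
have PE k : fine (P (Ev (i :: t) (Bk k))) = fine (P (omi i @^-1` A k)) * fine (P (Ev t B)).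
  rewrite /Ev indep //; last first.
    - by rewrite /= pi pt.
    - by rewrite /= nit ut.
  rewrite big_cons /Bk eqxx.
  rewrite (eq_big_seq (fun j => P (om j.1 j.2 @^-1` B j))); last first.
    move=> j jt /=; have -> // : (j == i) = false.
    by apply/eqP => ji; move: nit; rewrite -ji jt.
  rewrite -indep //.

  rewrite fineM //; apply: fin_num_measure; first exact: mpre.
  exact: mEv.
have pw w : \1_(Ev t B) w * \prod_(j <- i :: s) Fs (omi j w) =
   \sum_(k < K) c k * (\1_(Ev (i::t) (Bk k)) w * \prod_(j <- s) Fs (omi j w)).
  rewrite big_cons /Fs big_distrl big_distrr /=; apply: eq_bigr => k _.
  rewrite EvE indicI /=.
  change (\1_(omi i @^-1` A k) w) with (\1_(A k) (omi i w) : R).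
  by rewrite mulrA mulrCA !mulrA.
have mG k : measurable_fun setT (fun w => \1_(Ev (i::t) (Bk k)) w * \prod_(j <- s) Fs (omi j w)).
  apply: measurable_funM; first by apply: measurable_indic; apply: mEv.
  apply: measurable_prod => j _; exact: measurableT_comp mFs (momi j).
have G0k k w : 0 <= \1_(Ev (i::t) (Bk k)) w * \prod_(j <- s) Fs (omi j w).
  by rewrite mulr_ge0 ?indicE ?ler0n //; apply: prodr_ge0 => j _; apply: Fs0.
under eq_integral => w _ do rewrite pw -sumEFin.
rewrite ge0_integral_sum //; last first.
- by move=> k w _; rewrite lee_fin mulr_ge0.
- by move=> k; apply/measurable_EFinP; apply: measurable_funM => //; exact: measurable_cst.
set Pr := \prod_(j <- s) \sum_(k0 < K) c k0 * fine (P (omi j @^-1` A k0)).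
transitivity (\sum_(k < K) (c k * (fine (P (omi i @^-1` A k)) * fine (P (Ev t B)) * Pr))%:E)%E.
  apply: eq_bigr => k _.
  under eq_integral do rewrite EFinM.
  rewrite ge0_integralZl //; last 3 first.
  - exact/measurable_EFinP.
  - by move=> w _; rewrite lee_fin.
  - by rewrite lee_fin.
  rewrite IH //; last 2 first.
  - by rewrite -cat1s (perm_uniq (introT permPl (perm_catCA s [:: i] t))).
  - by rewrite -cat1s (perm_all _ (introT permPl (perm_catCA s [:: i] t))).
  by rewrite PE -EFinM.
rewrite sumEFin; congr (_%:E).
rewrite big_cons big_distrl big_distrr /=; apply: eq_bigr => k _.
rewrite -/Pr; ring.
Qed.

Lemma G1 s : uniq s -> all pos2 s ->
  (\int[P]_w (\prod_(i <- s) Fs (omi i w))%:E =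
   (\prod_(i <- s) \sum_(k < K) c k * fine (P (omi i @^-1` A k)))%:E)%E.
Proof.
move=> us ps.
have := @G0 s [::] (fun _ => setT); rewrite cats0 => /(_ us ps).
have E : Ev [::] (fun _ => setT) = setT.
  by apply/seteqP; split => // w _ j.
rewrite E probability_setT /= mul1r => <- //.
by apply: eq_integral => w _; rewrite indicE mem_set // mul1r.
Qed.

End FsSec.

Hypothesis idd : forall n m n' m' (B : set R), pos2 (n, m) -> pos2 (n', m') -> measurable B ->
     P (om n m @^-1` B) = P (om n' m' @^-1` B).

Lemma cvg_prod_seq (I : Type) (s : seq I) (f : I -> nat -> R) (l : I -> R) :
  (forall i, f i n @[n --> \oo] --> l i) ->
  (\prod_(i <- s) f i n) @[n --> \oo] --> \prod_(i <- s) l i.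
Proof.
move=> H; elim: s => [|i s IH].
  under eq_fun do rewrite big_nil; rewrite big_nil; exact: cvg_cst.
under eq_fun do rewrite big_cons; rewrite big_cons.
exact: cvgM.
Qed.

Section Approx.
Variables (g : R -> R).
Hypothesis mg : measurable_fun setT g.
Hypothesis g0 : forall x, 0 <= g x.

Let f := EFin \o g.
Let mf : measurable_fun setT f.
Proof. exact/measurable_EFinP. Qed.

Definition cn n k := if (k < n * 2 ^ n)%N then k%:R * 2 ^- n else n%:R : R.
Definition An n k := if (k < n * 2 ^ n)%N then dyadic_approx setT f n k
  else integer_approx setT f n.

Lemma cn0 n k : 0 <= cn n k.
Proof. by rewrite /cn; case: ifP => _ //; rewrite mulr_ge0. Qed.

Lemma mAn n k : measurable (An n k).
Proof.
rewrite /An /dyadic_approx; case: ifP => kn; last first.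
  exact: emeasurable_fun_c_infty.
rewrite kn; have -> : [set x | f x \in EFin @` [set` dyadic_itv R n k]] =
   g @^-1` [set` dyadic_itv R n k].
  apply/seteqP; split => x /=; rewrite inE /=.
    by move=> [y yI] [<-].
  by move=> H; exists (g x).
exact: mg (measurable_itv _).
Qed.

Lemma approxE n x : approx setT f n x = Fs (n * 2 ^ n).+1 (cn n) (An n) x.
Proof.
rewrite /Fs big_ord_recr /= /cn /An ltnn; congr (_ + _).
by apply: eq_bigr => k _; rewrite ltn_ord.
Qed.

Let u n x := approx setT f n x.

Lemma u0 n x : 0 <= u n x.
Proof. rewrite /u approxE; apply: Fs0; exact: cn0. Qed.

Lemma u_nd x : {homo u ^~ x : n m / (n <= m)%N >-> n <= m}.
Proof. by move=> n m nm; have /lefP := nd_approx setT f nm; apply. Qed.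

Lemma u_cvg x : u ^~ x @ \oo --> g x.
Proof.
have f0 : forall y, setT y -> (0 <= f y)%E by move=> y _; rewrite /f /= lee_fin.
exact: (@cvg_approx _ _ _ setT f x f0 I (ltry _)).
Qed.

Lemma mu n : measurable_fun setT (u n).
Proof.
rewrite /u; under eq_fun do rewrite approxE; apply: mFs => k.
exact: mAn.
Qed.

Let m n := \sum_(k < (n * 2 ^ n).+1) cn n k * fine (P (om 1 1 @^-1` An n k)).

Lemma intV s n : uniq s -> all pos2 s ->
  (\int[P]_w (\prod_(i <- s) u n (omi i w))%:E = (\prod_(i <- s) m n)%:E)%E.
Proof.
move=> us ps; under eq_integral do under eq_bigr do rewrite /u approxE.
rewrite G1 //; last 2 first.
- exact: cn0.
- exact: mAn.
congr (_%:E); apply: eq_big_seq => i iis; apply: eq_bigr => k _.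
have pi : pos2 i by move/allP: ps; apply.
by rewrite /omi (idd i.1 i.2 1 1) //; exact: mAn.
Qed.

Lemma mct_lim s : uniq s -> all pos2 s ->
  (fun n => (\prod_(i <- s) m n)%:E) @ \oo -->
  (\int[P]_w (\prod_(i <- s) g (omi i w))%:E)%E.
Proof.
move=> us ps.
pose V := fun n w => (\prod_(i <- s) u n (omi i w))%:E.
have mV n : measurable_fun setT (V n).
  apply/measurable_EFinP; apply: measurable_prod => i _.
  exact: measurableT_comp (mu n) (momi i).
have V0 n w : setT w -> (0 <= V n w)%E.
  by move=> _; rewrite lee_fin prodr_ge0 // => i _; exact: u0.
have Vnd w : setT w -> {homo V ^~ w : n k / (n <= k)%N >-> (n <= k)%E}.
  move=> _ n k nk; rewrite lee_fin; apply: ler_prod => i _.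
  by rewrite u0 /=; exact: u_nd.
have VL w : limn (V ^~ w) = (\prod_(i <- s) g (omi i w))%:E.
  apply: cvg_lim => //; apply: cvg_EFin; first exact: nearW.
  by apply: cvg_prod_seq => i; exact: u_cvg.
have C1 := @cvg_monotone_convergence _ _ _ P _ measurableT _ mV V0 Vnd.
have E1 : (\int[P]_w limn (V ^~ w) = \int[P]_w (\prod_(i <- s) g (omi i w))%:E)%E.
  by apply: eq_integral => w _; rewrite VL.
rewrite E1 in C1.
suff -> : (fun n => (\prod_(i <- s) m n)%:E) = (fun n => \int[P]_x V n x)%E by [].
by apply/funext => n; rewrite /V intV.
Qed.

Lemma mct_prod s (l : R) : uniq s -> all pos2 s ->
  (\int[P]_w (g (om 1 1 w))%:E = l%:E)%E ->
  (\int[P]_w (\prod_(i <- s) g (omi i w))%:E = (\prod_(i <- s) l)%:E)%E.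
Proof.
move=> us ps hl.
have C1 := mct_lim s us ps.
have C2 := @mct_lim [:: (1, 1)%N] erefl erefl.
have E2 : (fun n => (\prod_(i <- [:: (1, 1)%N]) m n)%:E) = (fun n => (m n)%:E).
  by apply/funext => n; rewrite big_seq1.
rewrite E2 in C2.
have E3 : (\int[P]_w (\prod_(i <- [:: (1, 1)%N]) g (omi i w))%:E = \int[P]_w (g (om 1 1 w))%:E)%E.
  by apply: eq_integral => w _; rewrite big_seq1.
rewrite E3 hl in C2.
move/fine_cvgP : C2 => [_ C2].
have C3 : (fun n => (\prod_(i <- s) m n)%:E) @ \oo --> (\prod_(i <- s) l)%:E.
  apply: cvg_EFin; first exact: nearW.
  by apply: (@cvg_prod_seq _ s (fun _ => m) (fun _ => l)) => _.
exact: (cvg_unique _ C1 C3).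
Qed.

End Approx.

Hypothesis iexp : forall n m b, pos2 (n, m) ->
  P.-integrable setT (fun w => (expR (b * om n m w))%:E).

Lemma Qfin b : (\int[P]_w (expR (b * om 1 1 w))%:E = (Qmgf P om b)%:E)%E.
Proof. by rewrite /Qmgf fineK //; apply: integrable_fin_num => //; exact: iexp. Qed.

Lemma Qpos b : 0 < Qmgf P om b.
Proof.
have mf : measurable_fun setT (fun w => (expR (b * om 1 1 w))%:E).
  apply/measurable_EFinP; apply: measurableT_comp; first exact: measurable_expR.
  by apply: measurable_funM; [exact: measurable_cst | exact: mom].
rewrite lt_neqAle; apply/andP; split; last first.
  by rewrite /Qmgf fine_ge0 // integral_ge0 // => w _; rewrite lee_fin expR_ge0.
apply/eqP => Q0.
have I0 : (\int[P]_w `|(expR (b * om 1 1 w))%:E| = 0)%E.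
  under eq_integral do rewrite gee0_abs ?lee_fin ?expR_ge0 //.
  by rewrite Qfin -Q0.
have := (@ae_eq_integral_abs _ _ _ P setT measurableT _ mf).1 I0.
case=> N [mN PN sub].
have TN : [set: Om] `<=` N.
  move=> w _; apply: sub => /= H.
  have := H I; move/eqP; rewrite eqe => /eqP E.
  by have := expR_gt0 (b * om 1 1 w); rewrite E ltxx.
have := le_measure P (mem_set measurableT) (mem_set mN) TN.
move=> H.
have : (1 <= 0 :> \bar R)%E.
  have E1 : (P [set: Om] = 1)%E by exact: probability_setT.
  by rewrite -E1 -PN.
by rewrite lee_fin ler10.
Qed.

Lemma Eg1 b : (\int[P]_w (expR (b * om 1 1 w + hca P om b))%:E = 1%:E)%E.
Proof.
under eq_integral do rewrite expRD mulrC EFinM.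
have mf : measurable_fun setT (fun w => (expR (b * om 1 1 w))%:E).
  apply/measurable_EFinP; apply: measurableT_comp; first exact: measurable_expR.
  by apply: measurable_funM; [exact: measurable_cst | exact: mom].
rewrite ge0_integralZl //; try (by move=> w _; rewrite lee_fin expR_ge0);
  try (by rewrite lee_fin expR_ge0).
rewrite Qfin -EFinM /hca expRN lnK ?mulVf //; last by rewrite posrE; exact: Qpos.
by apply: lt0r_neq0; apply: Qpos.
Qed.

Lemma Eprod b s : uniq s -> all pos2 s ->
  (\int[P]_w (\prod_(i <- s) expR (b * omi i w + hca P om b))%:E = 1%:E)%E.
Proof.
move=> us ps.
have mg : measurable_fun setT (fun x : R => expR (b * x + hca P om b)).
  apply: measurableT_comp; first exact: measurable_expR.
  apply: measurable_funD; last exact: measurable_cst.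
  by apply: measurable_funM; [exact: measurable_cst | exact: measurable_id].
have := @mct_prod (fun x : R => expR (b * x + hca P om b)) mg (fun x => expR_ge0 _) s 1 us ps (Eg1 b).
by rewrite big1.
Qed.

End Dis.


Section Ren.
Context (R : realType) (d2 : measure_display) (T : measurableType d2)
  (Ptau : probability T R) (xi : nat -> T -> nat * nat).
Hypothesis mxi : forall k x, measurable (xi k @^-1` [set x]).

Lemma rpS k t : renewal_point xi k.+1 t =
  ((renewal_point xi k t).1 + (xi k t).1, (renewal_point xi k t).2 + (xi k t).2)%N.
Proof. by rewrite /renewal_point !big_ord_recr. Qed.

Lemma mrp k q : measurable [set t | renewal_point xi k t = q].
Proof.
elim: k q => [|k IH] q.
  have E : forall t, renewal_point xi 0 t = (0, 0)%N by move=> t; rewrite /renewal_point !big_ord0.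
  case: (eqVneq q (0, 0)%N) => [->|nq].
    by have -> : [set t | renewal_point xi 0 t = (0, 0)%N] = setT
      by apply/seteqP; split => t //= _; rewrite E.
  have -> : [set t | renewal_point xi 0 t = q] = set0 => //.
  by apply/seteqP; split => t //=; rewrite E => Eq; move: nq; rewrite -Eq eqxx.
have -> : [set t | renewal_point xi k.+1 t = q] =
  \bigcup_a \bigcup_b (if ((a <= q.1) && (b <= q.2))%N then
     [set t | renewal_point xi k t = (a, b)] `&` (xi k @^-1` [set (q.1 - a, q.2 - b)%N])
     else set0).
  apply/seteqP; split => t /=.
    rewrite rpS => Eq.
    exists (renewal_point xi k t).1 => //; exists (renewal_point xi k t).2 => //.
    rewrite -Eq /= !leq_addr /=; split.
    by [].
    by rewrite !addKn; case: (xi k t).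
  move=> [a _ [b _]]; case: ifP => // /andP[aq bq] [/= H1 H2].
  rewrite rpS H1 H2 /=; case: q aq bq {H1 H2} => q1 q2 /= aq bq.
  by rewrite !subnKC.
apply: bigcupT_measurable => a; apply: bigcupT_measurable => b.
case: ifP => // _; apply: measurableI => //; exact: IH.
Qed.

Definition Rq q := [set t | renewal_set xi t q].

Lemma mRq q : measurable (Rq q).
Proof.
have -> : Rq q = \bigcup_k [set t | renewal_point xi k t = q].
  apply/seteqP; split => t /=; first by move=> [k _ H]; exists k.
  by move=> [k _ H]; exists k.
apply: bigcupT_measurable => k; exact: mrp.
Qed.

Variables (N M : nat).
Definition BX := ('I_N * 'I_M)%type.
Definition pt (p : BX) : nat * nat := ((p.1).+1, (p.2).+1)%N.

Definition St t : {set BX} := [set p : BX | pt p \in renewal_set xi t].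
Definition C (S : {set BX}) := [set t | St t = S].

Lemma mC S : measurable (C S).
Proof.
have -> : C S = \bigcap_(p in [set` enum [set: BX]])
    (if p \in S then Rq (pt p) else ~` Rq (pt p)).
  apply/seteqP; split => t /=.
    move=> <- p _; rewrite /St inE; case: ifP => H.
      exact: set_mem H.
    move=> Hr; have : pt p \in renewal_set xi t by apply: mem_set; exact: Hr.
    by rewrite H.
  move=> H; apply/setP => p; rewrite inE.
  have := H p; rewrite /= mem_enum in_setT => /(_ erefl).
  case: ifP => pS.
    by rewrite /Rq => Hp; apply/mem_set.
  by move=> Hp; apply/negP => /set_mem.
rewrite bigcap_seq; apply: bigsetI_measurable => p _.
by case: ifP => _; [exact: mRq | apply: measurableC; exact: mRq].
Qed.

Lemma shift2 (F : nat -> nat -> R) : \sum_(1 <= n < N.+1) \sum_(1 <= m < M.+1) F n m =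
  \sum_(n < N) \sum_(m < M) F n.+1 m.+1.
Proof.
rewrite big_add1 /= big_mkord; apply: eq_bigr => i _.
by rewrite big_add1 /= big_mkord.
Qed.

Lemma energyE (o : nat -> nat -> R) beta h t :
  energy o beta h N M (renewal_set xi t) =
  \sum_(p in St t) (beta * o (pt p).1 (pt p).2 + h).
Proof.
rewrite /energy shift2 pair_big /= [RHS]big_mkcond /=.
apply: eq_bigr => p _; rewrite indicE /St inE /pt.
by case: (_ \in _); rewrite ?mulr1 ?mulr0.
Qed.

Lemma decomp (a : BX -> R) t : expR (\sum_(p in St t) a p) =
  \sum_(S : {set BX}) expR (\sum_(p in S) a p) * \1_(C S) t.
Proof.
rewrite [RHS](bigD1 (St t)) //= [X in _ + X]big1 ?addr0.
  have Ht : t \in C (St t) by rewrite in_setE.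
  by rewrite indicE Ht mulr1.
move=> S nS; rewrite indicE.
suff -> : (t \in C S) = false by rewrite mulr0.
by apply/negP => /set_mem /= E; move: nS; rewrite E eqxx.
Qed.

Lemma PtfinE (A : set T) : measurable A -> Ptau A = (fine (Ptau A))%:E.
Proof. by move=> mA; rewrite fineK //; apply: fin_num_measure. Qed.

Lemma intdec (D : set T) (mD : measurable D) (a : BX -> R) :
  (\int[Ptau]_(t in D) (expR (\sum_(p in St t) a p))%:E =
   (\sum_(S : {set BX}) expR (\sum_(p in S) a p) * fine (Ptau (C S `&` D)))%:E)%E.
Proof.
have E t : (expR (\sum_(p in St t) a p))%:E =
    (\sum_(S : {set BX}) (expR (\sum_(p in S) a p) * \1_(C S) t)%:E)%E.
  by rewrite decomp sumEFin.
transitivity (\int[Ptau]_(t in D)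
   (\sum_(S : {set BX}) (expR (\sum_(p in S) a p) * \1_(C S) t)%:E)%E)%E.
  by apply: eq_integral => t _; rewrite E.
rewrite (@ge0_integral_sum _ _ _ Ptau D mD _
  (fun (S : {set BX}) t => (expR (\sum_(p in S) a p) * \1_(C S) t)%:E)); last first.
- by move=> S t _; rewrite lee_fin mulr_ge0 ?expR_ge0 // indicE ler0n.
- move=> S; apply/measurable_EFinP; apply: measurable_funM; first exact: measurable_cst.
  apply: measurable_indic; exact: mC.
rewrite -sumEFin; apply: eq_bigr => S _.
under eq_integral do rewrite EFinM.
rewrite ge0_integralZl //; try (by move=> w _; rewrite lee_fin indicE ler0n);
  try (by rewrite lee_fin expR_ge0).
  rewrite integral_indic //; last exact: mC.
  by rewrite EFinM -PtfinE //; apply: measurableI => //; exact: mC.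
apply/measurable_EFinP; apply: measurable_indic; exact: mC.
Qed.

End Ren.


Lemma Zrepr (R : realType) (d2 : measure_display) (T : measurableType d2)
  (Ptau : probability T R) (xi : nat -> T -> nat * nat)
  (mxi : forall k x, measurable (xi k @^-1` [set x]))
  (o : nat -> nat -> R) beta h N M (D : set T) (mD : measurable D) :
  fine (\int[Ptau]_(t in D) (expR (energy o beta h N M (renewal_set xi t)))%:E)%E =
  \sum_(S : {set BX N M}) expR (\sum_(p in S) (beta * o (pt N M p).1 (pt N M p).2 + h))
     * fine (Ptau (C d2 T xi N M S `&` D)).
Proof.
under eq_integral do rewrite energyE.
by rewrite intdec.
Qed.

Lemma sumC (R : realType) (d2 : measure_display) (T : measurableType d2)
  (Ptau : probability T R) (xi : nat -> T -> nat * nat)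
  (mxi : forall k x, measurable (xi k @^-1` [set x])) N M (D : set T) (mD : measurable D) :
  \sum_(S : {set BX N M}) fine (Ptau (C d2 T xi N M S `&` D)) = fine (Ptau D).
Proof.
have := @intdec R d2 T Ptau xi mxi N M D mD (fun _ => 0).
under eq_integral do rewrite big1 // expR0.
rewrite integral_cst // mul1e => ->.
rewrite /=; apply: eq_bigr => S _.
by rewrite big1 // expR0 mul1r.
Qed.

Section Wside.
Context (R : realType) (d1 : measure_display) (Om : measurableType d1)
  (P : probability Om R) (om : nat -> nat -> Om -> R).
Hypothesis mom : forall n m, measurable_fun setT (om n m).
Hypothesis indep : forall (s : seq (nat * nat)) (B : nat * nat -> set R),
     uniq s -> all pos2 s -> (forall i, measurable (B i)) ->
     P (\bigcap_(i in [set` s]) om i.1 i.2 @^-1` B i)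
     = (\prod_(i <- s) P (om i.1 i.2 @^-1` B i))%E.
Hypothesis idd : forall n m n' m' (B : set R), pos2 (n, m) -> pos2 (n', m') -> measurable B ->
     P (om n m @^-1` B) = P (om n' m' @^-1` B).
Hypothesis iexp : forall n m b, pos2 (n, m) ->
  P.-integrable setT (fun w => (expR (b * om n m w))%:E).
Variables (beta : R) (N M : nat).

Definition Y (S : {set BX N M}) w :=
  expR (\sum_(p in S) (beta * om (pt N M p).1 (pt N M p).2 w + hca P om beta)).

Lemma mY S : measurable_fun setT (Y S).
Proof.
have -> : Y S = expR \o (fun w => \sum_(p <- enum S)
   (beta * om (pt N M p).1 (pt N M p).2 w + hca P om beta)).
  by apply/funext => w; rewrite /Y /= big_enum.
apply: measurableT_comp; first exact: measurable_expR.
apply: measurable_sum => p; apply: measurable_funD; last exact: measurable_cst.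
by apply: measurable_funM; [exact: measurable_cst | exact: mom].
Qed.

Lemma EY S : (\int[P]_w (Y S w)%:E = 1%:E)%E.
Proof.
have := @Eprod R d1 Om P om mom indep idd iexp beta [seq pt N M p | p <- enum S].
rewrite map_inj_uniq ?enum_uniq; last first.
   by move=> [a b] [a' b'] /= [] /val_inj -> /val_inj ->.
have -> : all pos2 [seq pt N M p | p <- enum S] by apply/allP => q /mapP [p _ ->].
move=> /(_ erefl erefl) <-; apply: eq_integral => w _.
by rewrite /Y expR_sum big_map big_enum.
Qed.

Lemma Eint (c : {set BX N M} -> R) : (forall S, 0 <= c S) ->
  (\int[P]_w (\sum_(S : {set BX N M}) Y S w * c S)%:E = (\sum_(S : {set BX N M}) c S)%:E)%E.
Proof.
move=> c0.
have E w : (\sum_(S : {set BX N M}) Y S w * c S)%:E = (\sum_(S : {set BX N M}) (Y S w * c S)%:E)%E.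
  by rewrite sumEFin.
under eq_integral do rewrite E.
rewrite (@ge0_integral_sum _ _ _ P setT measurableT _
  (fun (S : {set BX N M}) w => (Y S w * c S)%:E)); last first.
- by move=> S w _; rewrite lee_fin mulr_ge0 ?expR_ge0.
- move=> S; apply/measurable_EFinP; apply: measurable_funM; first exact: mY.
  exact: measurable_cst.
rewrite -sumEFin; apply: eq_bigr => S _.
under eq_integral do rewrite EFinM muleC.
rewrite ge0_integralZl //; try (by move=> w _; rewrite lee_fin expR_ge0);
  try (by rewrite lee_fin).
  by rewrite EY mule1.
exact/measurable_EFinP/mY.
Qed.

End Wside.

Section Gen.
Context (R : realType) (d1 : measure_display) (Om : measurableType d1)
  (P : probability Om R).

Lemma mle (f g : Om -> R) : measurable_fun setT f -> measurable_fun setT g ->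
  measurable [set x | f x <= g x].
Proof. by move=> mf mg; rewrite -(setTI [set x | _]); apply: measurable_fun_le. Qed.

Lemma mlt (f g : Om -> R) : measurable_fun setT f -> measurable_fun setT g ->
  measurable [set x | f x < g x].
Proof.
move=> mf mg; have -> : [set x | f x < g x] = ~` [set x | g x <= f x].
  by apply/seteqP; split => x /=; rewrite ltNge => /negP.
by apply: measurableC; apply: mle.
Qed.

Lemma PfinE' (A : set Om) : measurable A -> P A = (fine (P A))%:E.
Proof. by move=> mA; rewrite fineK //; apply: fin_num_measure. Qed.

Lemma int_indicZ (A : set Om) (mA : measurable A) (a : R) : 0 <= a ->
  (\int[P]_w (a * \1_A w)%:E = a%:E * P A)%E.
Proof.
move=> a0; under eq_integral do rewrite EFinM.
rewrite ge0_integralZl //; try (by move=> w _; rewrite lee_fin indicE ler0n);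
  try (by rewrite lee_fin).
  by rewrite integral_indic // setIT.
by apply/measurable_EFinP; apply: measurable_indic.
Qed.

Lemma markov (f : Om -> R) (a : R) : measurable_fun setT f -> (forall w, 0 <= f w) ->
  0 < a -> (a%:E * P [set w | (a < f w)%R] <= \int[P]_w (f w)%:E)%E.
Proof.
move=> mf f0 a0.
have mH : measurable [set w | a < f w] by apply: mlt => //; exact: measurable_cst.
rewrite -int_indicZ //; last exact: ltW.
apply: ge0_le_integral => //.
- by move=> w _; rewrite lee_fin mulr_ge0 ?indicE ?ler0n // ltW.
- apply/measurable_EFinP; apply: measurable_funM; first exact: measurable_cst.
  exact: measurable_indic.
- exact/measurable_EFinP.
move=> w _; rewrite lee_fin indicE; case: (boolP (w \in _)) => H.
  by rewrite mulr1 ltW //; move: H; rewrite in_setE.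
by rewrite mulr0.
Qed.

Lemma ui_lower (Zf : Om -> R) (c : R) : measurable_fun setT Zf -> (forall w, 0 <= Zf w) ->
  (\int[P]_w (Zf w)%:E = 1%:E)%E ->
  (\int[P]_(w in [set w | (c < `|Zf w|)%R]) (`|Zf w|)%:E <= (1/4)%:E)%E ->
  ((1 / (4 * (`|c| + 1)))%:E <= P [set w | (1/2 < Zf w)%R])%E.
Proof.
move=> mZ Z0 EZ Hc.
set c' := `|c| + 1.
have c'0 : 0 < c' by rewrite /c' ltr_pwDr.
have cc' : c <= c' by rewrite /c' (le_trans (ler_norm c)) // lerDl.
have FE : [set w | (c < `|Zf w|)%R] = [set w | (c < Zf w)%R].
  by apply/seteqP; split => w /=; rewrite ger0_norm.
rewrite FE in Hc.
have JE : (\int[P]_(w in [set w | (c < Zf w)%R]) (`|Zf w|)%:E =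
   \int[P]_(w in [set w | (c < Zf w)%R]) (Zf w)%:E)%E.
  by apply: eq_integral => w _; rewrite ger0_norm.
rewrite JE in Hc.
set G := [set w | (1/2 < Zf w)%R].
set F := [set w | (c < Zf w)%R].
set J := (\int[P]_(w in F) (Zf w)%:E)%E.
have mG : measurable G by apply: mlt => //; exact: measurable_cst.
have mF : measurable F by apply: mlt => //; exact: measurable_cst.
have J0 : (0 <= J)%E by apply: integral_ge0 => w _; rewrite lee_fin.
have Jfin : J = (fine J)%:E.
  by rewrite fineK // fin_numElt (lt_le_trans _ J0) ?ltNye // (le_lt_trans Hc) ?ltry.
have JE2 : (\int[P]_w (Zf w * \1_F w)%:E = J)%E.
  rewrite /J [RHS]integral_mkcond; apply: eq_integral => w _.
  rewrite patchE indicE; case: (w \in F); first by rewrite mulr1.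
  by rewrite mulr0.
have pw w : Zf w <= 1/2 + (c' * \1_G w + Zf w * \1_F w).
  rewrite !indicE; case: (boolP (w \in G)) => HG; case: (boolP (w \in F)) => HF;
    rewrite ?mulr1 ?mulr0 ?addr0.
  - by have := c'0; lra.
  - have HF' : ~ F w by move=> H; move/negP: HF; apply; exact: mem_set.
    move/negP: HF'; rewrite /F /= -leNgt => HF'.
    by have := c'0; lra.
  - by have := c'0; lra.
  - have HG' : ~ G w by move=> H; move/negP: HG; apply; exact: mem_set.
    by move/negP: HG'; rewrite /G /= -leNgt.
have mI1 : measurable_fun setT (fun w => (c' * \1_G w)%:E).
  apply/measurable_EFinP; apply: measurable_funM; first exact: measurable_cst.
  exact: measurable_indic.
have mI2 : measurable_fun setT (fun w => (Zf w * \1_F w)%:E).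
  apply/measurable_EFinP; apply: measurable_funM => //; exact: measurable_indic.
have pI1 w : (0 <= (c' * \1_G w)%:E)%E by rewrite lee_fin mulr_ge0 ?indicE ?ler0n // ltW.
have pI2 w : (0 <= (Zf w * \1_F w)%:E)%E by rewrite lee_fin mulr_ge0 ?indicE ?ler0n.
have E1 : (\int[P]_w ((1/2)%:E + ((c' * \1_G w)%:E + (Zf w * \1_F w)%:E)) =
    (1/2)%:E + (c'%:E * P G + J))%E.
  rewrite ge0_integralD //; last 2 first.
  - by move=> w _; rewrite adde_ge0.
  - exact: emeasurable_funD.
  rewrite ge0_integralD // integral_cst // int_indicZ ?JE2 //; last exact: ltW.
  by congr (_ + _); rewrite -[RHS]mule1 -(probability_setT P).
have ineq : (1%:E <= (1/2)%:E + (c'%:E * P G + J))%E.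
  rewrite -EZ -E1; apply: ge0_le_integral => //.
  - by move=> w _; rewrite lee_fin.
  - exact/measurable_EFinP.
  - apply: emeasurable_funD; first exact: measurable_cst.
    exact: emeasurable_funD.
  by move=> w _; rewrite /= -!EFinD lee_fin.
rewrite (PfinE' G mG) Jfin -EFinM -!EFinD lee_fin in ineq.
rewrite (PfinE' G mG) lee_fin ler_pdivrMr ?mulr_gt0 //.
have Hc' : fine J <= 1/4 by rewrite -lee_fin -Jfin.
nra.
Qed.

End Gen.

Theorem proposition3p1
  (R : realType)
  (* renewal process tau, through its i.i.d. increments xi_k on (T, Ptau) *)
  (alpha : R) (L : R -> R)
  (d2 : measure_display) (T : measurableType d2) (Ptau : probability T R)
  (xi : nat -> T -> nat * nat)
  (* disorder omega on (Om, P) *)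
  (d1 : measure_display) (Om : measurableType d1) (P : probability Om R)
  (om : nat -> nat -> Om -> R) :
  0 <= alpha ->
  slowly_varying L ->
  (\sum_(1 <= n <oo) \sum_(1 <= m <oo) (Kfun L alpha (n + m))%:E = 1)%E ->
  (forall k x, measurable (xi k @^-1` [set x])) ->
  (forall k n m, (0 < n)%N -> (0 < m)%N ->
     Ptau (xi k @^-1` [set (n, m)]) = (Kfun L alpha (n + m))%:E) ->
  (forall (k : nat) (x : nat -> nat * nat),
     Ptau (\bigcap_(i in `I_k) xi i @^-1` [set x i])
     = (\prod_(i < k) Ptau (xi i @^-1` [set x i]))%E) ->
  (forall n m, measurable_fun setT (om n m)) ->
  (forall (s : seq (nat * nat)) (B : nat * nat -> set R),
     uniq s -> all pos2 s -> (forall i, measurable (B i)) ->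
     P (\bigcap_(i in [set` s]) om i.1 i.2 @^-1` B i)
     = (\prod_(i <- s) P (om i.1 i.2 @^-1` B i))%E) ->
  (forall n m n' m' (B : set R), pos2 (n, m) -> pos2 (n', m') -> measurable B ->
     P (om n m @^-1` B) = P (om n' m' @^-1` B)) ->
  (forall n m, pos2 (n, m) -> (\int[P]_w (om n m w)%:E = 0)%E) ->
  (forall n m, pos2 (n, m) -> (\int[P]_w (om n m w ^+ 2)%:E = 1)%E) ->
  (forall n m b, pos2 (n, m) ->
     P.-integrable setT (fun w => (expR (b * om n m w))%:E)) ->
  forall (beta : R) (M : nat -> nat),
  0 < beta ->
  (forall N, (0 < N)%N -> (0 < M N)%N) ->
  unif_integrable P
    (fun N w => Zfree Ptau xi (fun n m => om n m w) beta (hca P om beta) N (M N)) ->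
  exists zeta : R, 0 < zeta /\
    forall A : nat -> set (set (nat * nat)),
      (forall N, measurable (renewal_set xi @^-1` A N)) ->
      (fun N => Ptau (renewal_set xi @^-1` A N)) @ \oo --> 0%E ->
      exists N0 : nat, (0 < N0)%N /\
        forall N, (N0 <= N)%N ->
          let E := [set w | Pfree Ptau xi (fun n m => om n m w) beta (hca P om beta)
                        N (M N) (A N) <= 1 / 2
                      /\ 1 / 2 < Zfree Ptau xi (fun n m => om n m w) beta
                                   (hca P om beta) N (M N)] in
          (zeta%:E <= P E)%E.
Proof.
move=> alpha0 slL sumK mxi Pxi indxi mom indom idd mean0 var1 iexp beta M beta0 Mpos UI.
set h := hca P om beta.
pose Z N w := Zfree Ptau xi (fun n m => om n m w) beta h N (M N).
have ZE N w : Z N w = \sum_(S : {set BX N (M N)}) @Y R d1 Om P om beta N (M N) S w *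
    fine (Ptau (C d2 T xi N (M N) S `&` setT)).
  by rewrite /Z /Zfree (@Zrepr R d2 T Ptau xi mxi _ beta h N (M N) setT measurableT).
have Z0 N w : 0 <= Z N w.
  rewrite ZE; apply: sumr_ge0 => S _; apply: mulr_ge0; first exact: expR_ge0.
  by apply: fine_ge0; apply: measure_ge0.
have mZ N : measurable_fun setT (Z N).
  have -> : Z N = fun w => \sum_(S : {set BX N (M N)}) @Y R d1 Om P om beta N (M N) S w *
    fine (Ptau (C d2 T xi N (M N) S `&` setT)) by apply/funext => w; rewrite ZE.
  apply: measurable_sum => S; apply: measurable_funM; last exact: measurable_cst.
  exact: mY.
have EZ N : (\int[P]_w (Z N w)%:E = 1%:E)%E.
  under eq_integral do rewrite ZE.
  rewrite (@Eint R d1 Om P om mom indom idd iexp beta N (M N)); last first.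
    by move=> S; apply: fine_ge0; apply: measure_ge0.
  by rewrite (@sumC R d2 T Ptau xi mxi) // probability_setT.
have [c Hc] := UI (1/4) ltac:(lra).
set c' := `|c| + 1.
have c'0 : 0 < c' by rewrite /c' ltr_pwDr.
have PG N : (0 < N)%N -> ((1 / (4 * c'))%:E <= P [set w | (1/2 < Z N w)%R])%E.
  move=> N0; apply: ui_lower => //; exact: (Hc N N0).
exists (1 / (8 * c')); split; first by rewrite divr_gt0 // mulr_gt0.
move=> A mA cvgA.
pose D N := renewal_set xi @^-1` A N.
pose num N w := fine (\int[Ptau]_(t in D N)
   (expR (energy (fun n m => om n m w) beta h N (M N) (renewal_set xi t)))%:E).
have numE N w : num N w = \sum_(S : {set BX N (M N)}) @Y R d1 Om P om beta N (M N) S w *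
    fine (Ptau (C d2 T xi N (M N) S `&` D N)).
  by rewrite /num (@Zrepr R d2 T Ptau xi mxi _ beta h N (M N) (D N) (mA N)).
have num0 N w : 0 <= num N w.
  rewrite numE; apply: sumr_ge0 => S _; apply: mulr_ge0; first exact: expR_ge0.
  by apply: fine_ge0; apply: measure_ge0.
have mnum N : measurable_fun setT (num N).
  have -> : num N = fun w => \sum_(S : {set BX N (M N)}) @Y R d1 Om P om beta N (M N) S w *
    fine (Ptau (C d2 T xi N (M N) S `&` D N)) by apply/funext => w; rewrite numE.
  apply: measurable_sum => S; apply: measurable_funM; last exact: measurable_cst.
  exact: mY.
have Enum N : (\int[P]_w (num N w)%:E = (fine (Ptau (D N)))%:E)%E.
  under eq_integral do rewrite numE.
  rewrite (@Eint R d1 Om P om mom indom idd iexp beta N (M N)); last first.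
    by move=> S; apply: fine_ge0; apply: measure_ge0.
  by rewrite (@sumC R d2 T Ptau xi mxi N (M N) (D N) (mA N)).
have cvgD : (fun N => fine (Ptau (D N))) @ \oo --> (0 : R).
  by move/fine_cvgP : cvgA => [].
set eps := 1 / (32 * c').
have eps0 : 0 < eps by rewrite divr_gt0 // mulr_gt0.
move/cvgrPdist_le : cvgD => /(_ eps eps0) [N1 _ HN1].
exists (maxn 1 N1); split; first by rewrite leq_max.
move=> N HN.
have N0 : (0 < N)%N by apply: leq_trans HN; rewrite leq_maxl.
have N1N : (N1 <= N)%N by apply: leq_trans HN; rewrite leq_maxr.
cbv zeta.
set E := [set w | _ /\ _].
have aN : fine (Ptau (D N)) <= eps.
  by have := HN1 N N1N; rewrite sub0r normrN ger0_norm // fine_ge0 // measure_ge0.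
set G := [set w | (1/2 < Z N w)%R].
set H := [set w | (1/4 < num N w)%R].
have mG : measurable G by apply: mlt => //; exact: measurable_cst.
have mH : measurable H by apply: mlt => //; exact: measurable_cst.
have EE : E = G `&` [set w | 2 * num N w <= Z N w].
  rewrite /E; apply/seteqP; split => w /= [H1 H2]; split => //.
    have Zp : 0 < Z N w by apply: lt_trans H2.
    change (is_true (num N w / Z N w <= 1 / 2)) in H1.
    by move: H1; rewrite ler_pdivrMr // => H1; lra.
  have Zp : 0 < Z N w by apply: lt_trans H1.
  change (is_true (num N w / Z N w <= 1 / 2)).
  by rewrite ler_pdivrMr //; lra.
have mE : measurable E.
  rewrite EE; apply: measurableI => //; apply: mle => //.
  by apply: measurable_funM => //; exact: measurable_cst.
have GEH : G `<=` E `|` H.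
  move=> w Gw; case: (boolP (1/4 < num N w)) => Hw; [right | left] => //.
  rewrite EE; split => //; rewrite /= -leNgt in Hw.
  by rewrite /G /= in Gw; rewrite /=; lra.
have PGEH : (P G <= P E + P H)%E.
  apply: le_trans (measureU2 _ mE mH).
  apply: le_measure => //; rewrite inE //; exact: measurableU.
have MH := @markov R d1 Om P (num N) (1/4) (mnum N) (num0 N) ltac:(lra).
rewrite Enum in MH.
have PGN := PG N N0.
change (is_true ((1 / (4 * c'))%:E <= P G)%E) in PGN.
change (is_true ((1 / 4)%:E * P H <= (fine (Ptau (D N)))%:E)%E) in MH.
rewrite (@PfinE' R d1 Om P G mG) (@PfinE' R d1 Om P E mE) (@PfinE' R d1 Om P H mH) -EFinD lee_fin in PGEH.
rewrite (@PfinE' R d1 Om P G mG) lee_fin in PGN.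
rewrite (@PfinE' R d1 Om P H mH) -EFinM lee_fin in MH.
rewrite (@PfinE' R d1 Om P E mE) lee_fin.
have e4 : 1 / (4 * c') = c'^-1 / 4 by field; rewrite gt_eqF.
have e8 : 1 / (8 * c') = c'^-1 / 8 by field; rewrite gt_eqF.
have e32 : eps = c'^-1 / 32 by rewrite /eps; field; rewrite gt_eqF.
rewrite e4 in PGN; rewrite e32 in aN; rewrite e8.
lra.
Qed.
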